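(* Let $k\ge0$ and $m\ge0$ be integers and $a,b,c,d,w\in\mathbb{C}$ generic. (i) $${}_5F_4\!\left[\begin{matrix}\tfrac a2,\ \tfrac12+\tfrac a2,\ 1-k+a-b-c,\ 1+a-w,\ -m\\ 1+a-b,\ 1+a-c,\ \tfrac12+\tfrac12(a-w-m),\ 1+\tfrac12(a-w-m)\end{matrix}\,\Big|\,1\right]=\frac{(w)_m}{(w-a)_m}\sum_{n=0}^m\frac{(a)_n(b)_n(c)_n(-m)_n}{n!\,(1+a-b)_n(1+a-c)_n(w)_n}\,Q_k^{(2)}(n;a;b,c).$$ (ii) $${}_6F_5\!\left[\begin{matrix}\tfrac a2,\ \tfrac12+\tfrac a2,\ 1-k+a-b-c,\ k+d,\ 1+a-w,\ -m\\ 1+a-b,\ 1+a-c,\ d,\ \tfrac12+\tfrac12(a-w-m),\ 1+\tfrac12(a-w-m)\end{matrix}\,\Big|\,1\right]=\frac{(w)_m}{(w-a)_m}\sum_{n=0}^m\frac{(a)_n(b)_n(c)_n(-m)_n}{n!\,(1+a-b)_n(1+a-c)_n(w)_n}\,Q_k^{(2)}(n;a;b,c,d).$$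
   Context: $(c)_n$ denotes the Pochhammer symbol, $(c)_0=1$; ${}_pF_q(1)$ is the terminating generalized hypergeometric series at $1$. $Q_k^{(2)}(n;a;b,c)=\sum_{j=0}^k\frac{(-n)_j(n+a)_j(-k)_j}{j!(b)_j(c)_j}$ and $Q_k^{(2)}(n;a;b,c,d)=\sum_{j=0}^k\frac{(-n)_j(n+a)_j(-k)_j(k-1-a+b+c+d)_j}{j!(b)_j(c)_j(d)_j}$. Parameters are generic so no lower parameter is a nonpositive integer. *)

(* Defs.v *)
(* The field of complex numbers is rendered as an arbitrary
   numClosedFieldType (MathComp's abstraction of C; algC is an instance). *)
From HB Require Import structures.
From mathcomp Require Import all_boot all_order all_algebra.
Set Implicit Arguments. Unset Strict Implicit. Unset Printing Implicit Defensive.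
Import Order.TTheory GRing.Theory Num.Theory.
Local Open Scope ring_scope.

Definition poch {R : numClosedFieldType} (x : R) (n : nat) : R :=
  \prod_(i < n) (x + i%:R).

(* Terminating generalized hypergeometric series at 1:
   pFq[us; ds | 1] summed over j = 0..N (N is the termination bound,
   i.e. some upper parameter equals -N, so all later terms vanish). *)
Definition hypF1 {R : numClosedFieldType} (us ds : seq R) (N : nat) : R :=
  \sum_(j < N.+1)
    (\prod_(u <- us) poch u j) / ((\prod_(v <- ds) poch v j) * (j`!)%:R).

Definition Q2_3 {R : numClosedFieldType} (k n : nat) (a b c : R) : R :=
  \sum_(j < k.+1)
    poch (- n%:R) j * poch (n%:R + a) j * poch (- k%:R) j
      / ((j`!)%:R * poch b j * poch c j).

Definition Q2_4 {R : numClosedFieldType} (k n : nat) (a b c d : R) : R :=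
  \sum_(j < k.+1)
    poch (- n%:R) j * poch (n%:R + a) j * poch (- k%:R) j
      * poch (k%:R - 1 - a + b + c + d) j
      / ((j`!)%:R * poch b j * poch c j * poch d j).

(* genericity: x is not a nonpositive integer *)
Definition not_nonpos_int {R : numClosedFieldType} (x : R) : Prop :=
  forall j : nat, x != - j%:R.

(* Main.v *)
Require Import Defs.
From HB Require Import structures.
From mathcomp Require Import all_boot all_order all_algebra.
From mathcomp Require Import ring.
Set Implicit Arguments. Unset Strict Implicit. Unset Printing Implicit Defensive.
Import Order.TTheory GRing.Theory Num.Theory.
Local Open Scope ring_scope.

Lemma poch0 {R : numClosedFieldType} (x : R) : poch x 0 = 1.
Proof. by rewrite /poch big_ord0. Qed.

Lemma pochS {R : numClosedFieldType} (x : R) n : poch x n.+1 = poch x n * (x + n%:R).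
Proof. by rewrite /poch big_ord_recr. Qed.

Lemma pochD {R : numClosedFieldType} (x : R) i j :
  poch x (i + j) = poch x i * poch (x + i%:R) j.
Proof.
elim: j => [|j IH]; first by rewrite addn0 poch0 mulr1.
by rewrite addnS !pochS IH natrD addrA mulrA.
Qed.

Lemma poch_negnat {R : numClosedFieldType} (N j : nat) :
  (N < j)%N -> poch (- N%:R : R) j = 0.
Proof.
move=> H; rewrite -(subnKC H) pochD pochS addrC subrr mulr0 mul0r //.
Qed.

Lemma poch1 {R : numClosedFieldType} (x : R) : poch x 1 = x.
Proof. by rewrite pochS poch0 mul1r addr0. Qed.

Lemma poch_refl {R : numClosedFieldType} (x : R) n :
  poch (- x) n = (-1) ^+ n * poch (x - n%:R + 1) n.
Proof.
elim: n => [|n IH]; first by rewrite !poch0 expr0 mulr1.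
rewrite pochS IH -add1n pochD poch1 exprS.
have -> : x - (1 + n)%:R + 1 + 1%:R = x - n%:R + 1 by rewrite natrD; ring.
rewrite natrD; ring.
Qed.

Lemma poch_natS {R : numClosedFieldType} (n l : nat) :
  poch (n.+1%:R : R) l * n`!%:R = (n + l)`!%:R.
Proof.
elim: l => [|l IH]; first by rewrite poch0 mul1r addn0.
by rewrite pochS mulrAC IH addnS factS natrM -natrD -addSn mulrC.
Qed.

Lemma poch1_fact {R : numClosedFieldType} (n : nat) : poch (1 : R) n = n`!%:R.
Proof. by have := @poch_natS R 0 n; rewrite fact0 mulr1 add0n. Qed.

Lemma fact_neq0 {R : numClosedFieldType} (n : nat) : (n`!%:R : R) != 0.
Proof. by rewrite pnatr_eq0 -lt0n fact_gt0. Qed.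

Lemma poch_negN {R : numClosedFieldType} (N l : nat) : (l <= N)%N ->
  poch (- N%:R : R) l = (-1) ^+ l * 'C(N, l)%:R * l`!%:R.
Proof.
move=> H; rewrite poch_refl.
have -> : (N%:R : R) - l%:R + 1 = (N - l).+1%:R by rewrite -natrB // -addn1 natrD.
apply: (mulIf (@fact_neq0 R (N - l))).
rewrite -[LHS]mulrA (poch_natS (N - l)) subnK // -(bin_fact H) !natrM; ring.
Qed.

Lemma L1 {R : numClosedFieldType} (x y : R) n :
  poch (x + y) n = \sum_(i < n.+1) 'C(n, i)%:R * poch x i * poch y (n - i).
Proof.
elim: n => [|n IH]; first by rewrite big_ord1 !poch0 bin0 mulr1 mul1r.
rewrite pochS IH big_distrl /=.
have E : forall i : 'I_n.+1, 'C(n, i)%:R * poch x i * poch y (n - i) * (x + y + n%:R)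
   = 'C(n, i)%:R * poch x i.+1 * poch y (n - i) + 'C(n, i)%:R * poch x i * poch y (n.+1 - i).
  move=> i; have Hi : (i <= n)%N by rewrite -ltnS.
  rewrite !pochS subSn // pochS natrB //; ring.
rewrite (eq_bigr _ (fun i _ => E i)) big_split /=.
rewrite [in RHS]big_ord_recl /= bin0 poch0 subn0.
under [in RHS]eq_bigr => i _ do rewrite binS natrD !mulrDl.
rewrite big_split /= addrA addrC; congr (_ + _).
pose F := fun i : nat => 'C(n, i)%:R * poch x i * poch y (n.+1 - i).
have -> : 1 * 1 * poch y n.+1 = F 0%N by rewrite /F bin0 poch0 subn0 !mul1r.
have H1 : \sum_(i < n.+2) F i = F 0%N + \sum_(i < n.+1) F (bump 0 i) := big_ord_recl _ _.
have H2 : \sum_(i < n.+2) F i = \sum_(i < n.+1) F i + F n.+1 := big_ord_recr _ _.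
have -> : \sum_(i < n.+1) 'C(n, i.+1)%:R * poch x (bump 0 i) * poch y (n.+1 - bump 0 i)
   = \sum_(i < n.+1) F (bump 0 i) by apply: eq_bigr => i _; rewrite /F /bump /= add1n.
rewrite -H1 H2 {2}/F bin_small // !mul0r addr0.
by apply: eq_bigr.
Qed.

Lemma sign_sq {R : numClosedFieldType} n : ((-1) ^+ n * (-1) ^+ n : R) = 1.
Proof. by rewrite -exprD addnn -mul2n exprM sqrrN !expr1n. Qed.

Lemma Vand {R : numClosedFieldType} (N : nat) (al g : R) :
  \sum_(l < N.+1) poch (- N%:R) l * poch al l * poch (g + l%:R) (N - l) / l`!%:R
  = poch (g - al) N.
Proof.
have := L1 al (1 - g - N%:R) N.
have -> : al + (1 - g - N%:R) = - (g - al + N%:R - 1) by ring.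
rewrite poch_refl.
have -> : g - al + N%:R - 1 - N%:R + 1 = g - al by ring.
move=> H; apply: (@mulfI _ ((-1) ^+ N)); first by rewrite signr_eq0.
rewrite H big_distrr /=; apply: eq_bigr => [[l Hl]] _ /=.
rewrite ltnS in Hl.
rewrite poch_negN //.
have -> : 1 - g - N%:R = - (g + N%:R - 1) by ring.
rewrite poch_refl.
have -> : g + N%:R - 1 - (N - l)%:R + 1 = g + l%:R by rewrite natrB //; ring.
rewrite -{1}(subnKC Hl) exprD.
set C := 'C(N, l)%:R; set A := poch al l; set G := poch (g + l%:R) (N - l).
set t := (-1) ^+ (N - l) : R.
have Hf := @fact_neq0 R l.
rewrite -[X in X = _]/((-1) ^+ l * t * ((-1) ^+ l * C * l`!%:R * A * G / l`!%:R)).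
transitivity (((-1) ^+ l * (-1) ^+ l) * (C * A * (t * G)) * (l`!%:R / l`!%:R)); first by ring.
by rewrite sign_sq divff // mulr1 mul1r.
Qed.


Lemma Tri {R : numClosedFieldType} (F : nat -> nat -> R) M :
  \sum_(n < M.+1) \sum_(j < n.+1) F n j
  = \sum_(j < M.+1) \sum_(l < (M - j).+1) F (j + l)%N j.
Proof.
transitivity (\sum_(n < M.+1) \sum_(j < M.+1) (if (j < n.+1)%N then F n j else 0)).
  apply: eq_bigr => n _; rewrite -big_mkcond /=.
  by rewrite (big_ord_widen M.+1 (F n)) // ltnS ltnW.
rewrite exchange_big /=; apply: eq_bigr => [[j Hj]] _ /=.
rewrite -big_mkcond /=.
have -> : \sum_(n < M.+1 | (j < n.+1)%N) F n j = \sum_(n < M.+1 | xpredT n && (j <= n)%N) F n j.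
  by apply: eq_bigl => n; rewrite ltnS.
rewrite -(big_geq_mkord j M.+1 xpredT (fun n => F n j)) -{1}(add0n j) big_addn big_mkord subSn //.
by apply: eq_big => // l _; rewrite addnC.
Qed.

Lemma sum_widen {R : numClosedFieldType} (F : nat -> R) N M :
  (N <= M)%N -> (forall i, (N < i)%N -> F i = 0) ->
  \sum_(i < N.+1) F i = \sum_(i < M.+1) F i.
Proof.
move=> NM H0; rewrite (big_ord_widen M.+1 F) // big_mkcond /=.
apply: eq_bigr => i _; case: ifP => // /negbT; rewrite -leqNgt => Hi.
by rewrite H0.
Qed.

Lemma poch_split {R : numClosedFieldType} (x : R) l N : (l <= N)%N ->
  poch x N = poch x l * poch (x + l%:R) (N - l).
Proof. by move=> H; rewrite -pochD subnKC. Qed.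

Lemma poch_nz_le {R : numClosedFieldType} (x : R) l N : (l <= N)%N ->
  poch x N != 0 -> poch x l != 0.
Proof. by move=> H; rewrite (poch_split x H) mulf_eq0 negb_or => /andP[]. Qed.

Lemma poch_nz_shift {R : numClosedFieldType} (x : R) l N : (l <= N)%N ->
  poch x N != 0 -> poch (x + l%:R) (N - l) != 0.
Proof. by move=> H; rewrite (poch_split x H) mulf_eq0 negb_or => /andP[]. Qed.

Lemma Vd {R : numClosedFieldType} (N : nat) (al g : R) : poch g N != 0 ->
  \sum_(l < N.+1) poch (- N%:R) l * poch al l / (l`!%:R * poch g l)
  = poch (g - al) N / poch g N.
Proof.
move=> HN; rewrite -Vand mulr_suml; apply: eq_bigr => [[l Hl]] _ /=.
rewrite ltnS in Hl.
have H1 := poch_nz_le Hl HN; have H2 := poch_nz_shift Hl HN.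
have Hf := @fact_neq0 R l.
rewrite (poch_split g Hl); field.
by rewrite Hf H1 H2.
Qed.

Lemma negnat_shift {R : numClosedFieldType} (N r : nat) : (r <= N)%N ->
  - (N%:R : R) + r%:R = - (N - r)%:R.
Proof. by move=> H; rewrite natrB //; ring. Qed.

Lemma pochneg_fact {R : numClosedFieldType} (r s : nat) :
  poch (- (r + s)%:R : R) r / (r + s)`!%:R = (-1) ^+ r / s`!%:R.
Proof.
rewrite poch_refl.
have -> : ((r + s)%:R : R) - r%:R + 1 = s.+1%:R by rewrite natrD -addn1 natrD; ring.
rewrite addnC -(poch_natS s r).
have Hf := @fact_neq0 R s.
have Hp : poch (s.+1%:R : R) r != 0.
  by apply/eqP => E; move: (@fact_neq0 R (s + r)); rewrite -poch_natS E mul0r eqxx.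
field; by rewrite Hf Hp.
Qed.

Lemma Saal {R : numClosedFieldType} (N : nat) (al be g ep : R) :
  ep = 1 + al + be - g - N%:R -> poch ep N != 0 ->
  \sum_(l < N.+1) poch (- N%:R) l * poch al l * poch be l * poch (g + l%:R) (N - l)
       / (l`!%:R * poch ep l) * poch ep N
  = (-1) ^+ N * poch (g - al) N * poch (g - be) N.
Proof.
move=> Hep HN.
pose T l := poch (- N%:R) l * poch al l * poch (g + l%:R) (N - l) / l`!%:R * poch ep N.
pose U l r := poch (- l%:R) r * poch (ep - be) r / (r`!%:R * poch ep r).
have step1 : forall l : 'I_N.+1,
   poch (- N%:R) l * poch al l * poch be l * poch (g + l%:R) (N - l)
       / (l`!%:R * poch ep l) * poch ep N = \sum_(r < l.+1) T l * U l r.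
  move=> [l Hl] /=; rewrite ltnS in Hl.
  have Hl' := poch_nz_le Hl HN.
  rewrite -big_distrr /= /U Vd // (_ : ep - (ep - be) = be); last by ring.
  rewrite /T; have Hf := @fact_neq0 R l; field; by rewrite Hf Hl'.
rewrite (eq_bigr _ (fun l _ => step1 l)) /=.
rewrite (Tri (fun l r => T l * U l r)) /=.
have pf : forall r s : nat, poch (- (r + s)%:R : R) r = (-1) ^+ r * (r + s)`!%:R / s`!%:R.
  move=> r s; have := pochneg_fact (R := R) r s; have Hf := @fact_neq0 R (r + s).
  move/(congr1 (fun z => z * (r + s)`!%:R)); rewrite mulfVK // => ->; field.
  exact: fact_neq0.
have step3 : forall r : 'I_N.+1, \sum_(s < (N - r).+1) T (r + s)%N * U (r + s)%N r
   = poch (ep - be) r * poch ep N / (r`!%:R * poch ep r) *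
     ((-1) ^+ r * poch (- N%:R) r * poch al r * poch (g - al) (N - r)).
  move=> [r Hr] /=; rewrite ltnS in Hr.
  have -> : g - al = (g + r%:R) - (al + r%:R) by ring.
  rewrite -(Vand (N - r) (al + r%:R) (g + r%:R)) !big_distrr /=.
  apply: eq_bigr => [[s Hs]] _ /=.
  rewrite ltnS in Hs.
  rewrite /T /U !pochD negnat_shift // pf natrD subnDA addrA.
  have Hr' := poch_nz_le Hr HN.
  have Hf1 := @fact_neq0 R r; have Hf2 := @fact_neq0 R s; have Hf3 := @fact_neq0 R (r + s).
  field; by rewrite Hf1 Hf2 Hf3 Hr'.
rewrite (eq_bigr _ (fun r _ => step3 r)) /=.
have step4 : forall r : 'I_N.+1,
   poch (ep - be) r * poch ep N / (r`!%:R * poch ep r) *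
     ((-1) ^+ r * poch (- N%:R) r * poch al r * poch (g - al) (N - r))
   = poch (g - al) N * (poch (- N%:R) r * poch al r * poch (ep + r%:R) (N - r) / r`!%:R).
  move=> [r Hr] /=; rewrite ltnS in Hr.
  have -> : ep - be = - (g - al + N%:R - 1) by rewrite Hep; ring.
  rewrite poch_refl.
  have -> : g - al + N%:R - 1 - r%:R + 1 = (g - al) + (N - r)%:R by rewrite natrB //; ring.
  rewrite [poch (g - al) N](_ : _ = poch (g - al) (N - r) * poch (g - al + (N - r)%:R) r);
    last by rewrite -pochD subnK.
  rewrite (poch_split ep Hr).
  have Hr' := poch_nz_le Hr HN; have Hf := @fact_neq0 R r.
  have Hs := @sign_sq R r.
  set s := (-1) ^+ r : R.
  transitivity ((s * s) * (poch (g - al) (N - r) * poch (g - al + (N - r)%:R) r *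
    (poch (- N%:R) r * poch al r * poch (ep + r%:R) (N - r) / r`!%:R)) * (poch ep r / poch ep r)).
    field; by rewrite Hf Hr'.
  by rewrite Hs divff // mulr1 mul1r.
rewrite (eq_bigr _ (fun r _ => step4 r)) /= -big_distrr /= Vand.
have -> : ep - al = - (g - be + N%:R - 1) by rewrite Hep; ring.
rewrite poch_refl.
have -> : g - be + N%:R - 1 - N%:R + 1 = g - be by ring.
ring.
Qed.

Lemma two_neq0 {R : numClosedFieldType} : (2 : R) != 0.
Proof. by rewrite pnatr_eq0. Qed.

Lemma Dup {R : numClosedFieldType} (y : R) j :
  poch y (j + j) = 4 ^+ j * poch (y / 2) j * poch (2^-1 + y / 2) j.
Proof.
elim: j => [|j IH]; first by rewrite !poch0 expr0 !mulr1.
rewrite addSn addnS !pochS IH exprS !mulrSr !natrD.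
have H2 := @two_neq0 R.
field => //.
Qed.

Lemma Prod {R : numClosedFieldType} (u : R) j m : (j <= m)%N ->
  (-1) ^+ j * poch (u - j%:R) (m - j) * poch (1 - u - m%:R) (j + j)
  = poch u m * poch (1 - u) j.
Proof.
move=> H.
have -> : 1 - u - m%:R = - (u + m%:R - 1) by ring.
have -> : 1 - u = - (u - 1) by ring.
rewrite !poch_refl.
have -> : u + m%:R - 1 - (j + j)%:R + 1 = (u - j%:R) + (m - j)%:R by rewrite natrB // natrD; ring.
have -> : u - 1 - j%:R + 1 = u - j%:R by ring.
have E1 : poch (u - j%:R) (m - j) * poch (u - j%:R + (m - j)%:R) (j + j)
   = poch (u - j%:R) (m + j) by rewrite -pochD addnA subnK.
have E2 : poch (u - j%:R) (m + j) = poch (u - j%:R) j * poch u m.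
  by rewrite addnC pochD; congr (_ * _); congr poch; ring.
rewrite exprD sign_sq mul1r.
transitivity ((-1) ^+ j * (poch (u - j%:R) (m - j) * poch (u - j%:R + (m - j)%:R) (j + j))).
  by ring.
rewrite E1 E2; ring.
Qed.

Lemma pochneg_fact' {R : numClosedFieldType} (r s : nat) :
  poch (- (r + s)%:R : R) r = (-1) ^+ r * (r + s)`!%:R / s`!%:R.
Proof.
have := pochneg_fact (R := R) r s; have Hf := @fact_neq0 R (r + s).
move/(congr1 (fun z => z * (r + s)`!%:R)); rewrite mulfVK // => ->; field.
exact: fact_neq0.
Qed.

Lemma nz2 {R : numClosedFieldType} (x y : R) : x * y != 0 -> x != 0 /\ y != 0.
Proof. by rewrite mulf_eq0 negb_or => /andP[]. Qed.

Lemma ClaimA {R : numClosedFieldType} (m : nat) (a w : R) (Z : nat -> R) :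
  poch w m != 0 ->
  poch (2^-1 + 2^-1 * (a - w - m%:R)) m != 0 ->
  poch (1 + 2^-1 * (a - w - m%:R)) m != 0 ->
  \sum_(n < m.+1) poch a n * poch (- m%:R) n / (n`!%:R * poch w n) *
      \sum_(j < n.+1) poch (- n%:R) j * poch (n%:R + a) j * Z j / j`!%:R
  = poch (w - a) m / poch w m *
    \sum_(j < m.+1) poch (a / 2) j * poch (2^-1 + a / 2) j * poch (1 + a - w) j
        * poch (- m%:R) j * Z j
        / (j`!%:R * poch (2^-1 + 2^-1 * (a - w - m%:R)) j
           * poch (1 + 2^-1 * (a - w - m%:R)) j).
Proof.
move=> Hw Hh1 Hh2.
pose G n j := poch a n * poch (- m%:R) n / (n`!%:R * poch w n) *
   (poch (- n%:R) j * poch (n%:R + a) j * Z j / j`!%:R).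
rewrite (eq_bigr (fun n : 'I_m.+1 => \sum_(j < n.+1) G n j)); last first.
  by move=> n _; rewrite big_distrr.
rewrite (Tri G) big_distrr /=; apply: eq_bigr => [[j Hj]] _ /=.
rewrite ltnS in Hj.
have Hwj := poch_nz_le Hj Hw; have Hwj' := poch_nz_shift Hj Hw.
have Hfj := @fact_neq0 R j.
pose C := (-1) ^+ j * poch a (j + j) * poch (- m%:R) j * Z j / (j`!%:R * poch w j).
have step : forall l : 'I_(m - j).+1, G (j + l)%N j =
   C * (poch (- (m - j)%:R) l * poch (a + (j + j)%:R) l / (l`!%:R * poch (w + j%:R) l)).
  move=> [l Hl] /=; rewrite ltnS in Hl.
  have Hjl : (j + l <= m)%N by rewrite -(subnKC Hj) leq_add2l.
  have := poch_nz_le Hjl Hw; rewrite pochD => /nz2 [_ Hwl].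
  have Hfl := @fact_neq0 R l; have Hfjl := @fact_neq0 R (j + l).
  have E : poch a (j + l) * poch ((j + l)%:R + a) j = poch a (j + j) * poch (a + (j + j)%:R) l.
    by rewrite addrC -pochD -pochD addnAC.
  rewrite /G /C.
  transitivity ((poch a (j + l) * poch ((j + l)%:R + a) j) * poch (- m%:R) (j + l)
     * poch (- (j + l)%:R) j * Z j / ((j + l)`!%:R * poch w (j + l) * j`!%:R)).
    by field; rewrite Hfj Hfjl (poch_nz_le Hjl Hw).
  rewrite E !pochD negnat_shift // pochneg_fact'.
  field; by rewrite Hfj Hfl Hfjl Hwj Hwl.
rewrite (eq_bigr _ (fun l _ => step l)) -big_distrr /= Vd //.
rewrite /C Dup.
have -> : w + j%:R - (a + (j + j)%:R) = (w - a) - j%:R by rewrite natrD; ring.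
have -> : 1 + a - w = 1 - (w - a) by ring.
have HP := Prod (w - a) Hj.
rewrite Dup in HP.
have Eh1 : (1 - (w - a) - m%:R) / 2 = 2^-1 + 2^-1 * (a - w - m%:R) by ring.
have Eh2 : 2^-1 + (1 - (w - a) - m%:R) / 2 = 1 + 2^-1 * (a - w - m%:R).
  by have H2 := @two_neq0 R; field.
rewrite Eh2 Eh1 in HP.
have Hh1j := poch_nz_le Hj Hh1; have Hh2j := poch_nz_le Hj Hh2.
symmetry.
transitivity ((poch (w - a) m * poch (1 - (w - a)) j) *
  (poch (a / 2) j * poch (2^-1 + a / 2) j * poch (- m%:R) j * Z j
   / (poch w m * j`!%:R * poch (2^-1 + 2^-1 * (a - w - m%:R)) j *
    poch (1 + 2^-1 * (a - w - m%:R)) j))).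
  by field; rewrite Hw Hfj Hh1j Hh2j.
rewrite -HP (poch_split w Hj).
field; by rewrite Hfj Hh1j Hh2j Hwj Hwj'.
Qed.

Lemma SaalD {R : numClosedFieldType} (N : nat) (al be g ep : R) :
  ep = 1 + al + be - g - N%:R -> poch ep N != 0 -> poch g N != 0 ->
  \sum_(l < N.+1) poch (- N%:R) l * poch al l * poch be l / (l`!%:R * poch g l * poch ep l)
  = (-1) ^+ N * poch (g - al) N * poch (g - be) N / (poch g N * poch ep N).
Proof.
move=> He HN Hg; rewrite -(Saal He HN) mulr_suml; apply: eq_bigr => [[l Hl]] _ /=.
rewrite ltnS in Hl.
have := Hg; rewrite (poch_split g Hl) => /nz2 [H1 H2].
have H3 := poch_nz_le Hl HN; have Hf := @fact_neq0 R l.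
field; by rewrite Hf H1 H2 H3 HN.
Qed.

Lemma binfact {R : numClosedFieldType} (i l : nat) :
  'C(i + l, i)%:R / (i + l)`!%:R = (1 : R) / (i`!%:R * l`!%:R).
Proof.
have := bin_fact (leq_addr l i); rewrite addKn => E.
have Hf := @fact_neq0 R (i + l); have Hi := @fact_neq0 R i; have Hl := @fact_neq0 R l.
rewrite -E !natrM.
have Hc : ('C(i + l, i)%:R : R) != 0 by rewrite pnatr_eq0 -lt0n bin_gt0 leq_addr.
field; by rewrite Hc Hi Hl.
Qed.

Lemma ClaimB {R : numClosedFieldType} (n : nat) (a b c : R) (Y : nat -> R) :
  poch (1 + a - b) n != 0 -> poch (1 + a - c) n != 0 ->
  poch b n != 0 -> poch c n != 0 ->
  \sum_(j < n.+1) poch (- n%:R) j * poch (n%:R + a) j *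
     (\sum_(i < j.+1) 'C(j, i)%:R * Y i * poch (1 + a - b - c) (j - i))
     / (j`!%:R * poch (1 + a - b) j * poch (1 + a - c) j)
  = poch b n * poch c n / (poch (1 + a - b) n * poch (1 + a - c) n) *
    \sum_(i < n.+1) poch (- n%:R) i * poch (n%:R + a) i * Y i
        / (i`!%:R * poch b i * poch c i).
Proof.
move=> Hg Hd Hb Hc.
pose H j i := poch (- n%:R) j * poch (n%:R + a) j *
     ('C(j, i)%:R * Y i * poch (1 + a - b - c) (j - i))
     / (j`!%:R * poch (1 + a - b) j * poch (1 + a - c) j).
rewrite (eq_bigr (fun j : 'I_n.+1 => \sum_(i < j.+1) H j i)); last first.
  by move=> j _; rewrite /H big_distrr big_distrl.
rewrite (Tri H) big_distrr /=; apply: eq_bigr => [[i Hi]] _ /=.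
rewrite ltnS in Hi.
pose K := poch (- n%:R) i * poch (n%:R + a) i * Y i
   / (i`!%:R * poch (1 + a - b) i * poch (1 + a - c) i).
have Hgi := poch_nz_le Hi Hg; have Hgi' := poch_nz_shift Hi Hg.
have Hdi := poch_nz_le Hi Hd; have Hdi' := poch_nz_shift Hi Hd.
have Hfi := @fact_neq0 R i.
have step : forall l : 'I_(n - i).+1, H (i + l)%N i =
   K * (poch (- (n - i)%:R) l * poch (n%:R + a + i%:R) l * poch (1 + a - b - c) l
     / (l`!%:R * poch (1 + a - b + i%:R) l * poch (1 + a - c + i%:R) l)).
  move=> [l Hl] /=; rewrite ltnS in Hl.
  have Hil : (i + l <= n)%N by rewrite -(subnKC Hi) leq_add2l.
  have := poch_nz_le Hil Hg; rewrite pochD => /nz2 [_ Hgl].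
  have := poch_nz_le Hil Hd; rewrite pochD => /nz2 [_ Hdl].
  have Hfl := @fact_neq0 R l; have Hfil := @fact_neq0 R (i + l).
  rewrite /H /K addKn.
  transitivity (('C(i + l, i)%:R / (i + l)`!%:R) * poch (- n%:R) (i + l) * poch (n%:R + a) (i + l)
      * Y i * poch (1 + a - b - c) l / (poch (1 + a - b) (i + l) * poch (1 + a - c) (i + l))).
    by field; rewrite Hfil (poch_nz_le Hil Hg) (poch_nz_le Hil Hd).
  rewrite binfact !pochD negnat_shift //.
  field; by rewrite Hfi Hfl Hgi Hgl Hdi Hdl.
rewrite (eq_bigr _ (fun l _ => step l)) -big_distrr /=.
rewrite (SaalD (ep := 1 + a - c + i%:R)) //; last by rewrite natrB //; ring.
have -> : 1 + a - b + i%:R - (n%:R + a + i%:R) = - (b + n%:R - 1) by ring.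
rewrite poch_refl mulrA -exprD addnn -mul2n exprM sqrrN !expr1n mul1r.
have -> : b + n%:R - 1 - (n - i)%:R + 1 = b + i%:R by rewrite natrB //; ring.
have -> : 1 + a - b + i%:R - (1 + a - b - c) = c + i%:R by ring.
rewrite /K (poch_split b Hi) (poch_split c Hi) (poch_split (1 + a - b) Hi) (poch_split (1 + a - c) Hi).
have := Hb; rewrite (poch_split b Hi) => /nz2 [Hb1 Hb2].
have := Hc; rewrite (poch_split c Hi) => /nz2 [Hc1 Hc2].
field; by rewrite Hfi Hgi Hgi' Hdi Hdi' Hb1 Hc1.
Qed.

Lemma E1 {R : numClosedFieldType} (k j : nat) (a b c : R) :
  poch (1 - k%:R + a - b - c) j
  = \sum_(i < j.+1) 'C(j, i)%:R * poch (- k%:R) i * poch (1 + a - b - c) (j - i).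
Proof.
by rewrite -L1; congr poch; ring.
Qed.

Lemma E2 {R : numClosedFieldType} (k j : nat) (a b c d : R) : poch d j != 0 ->
  poch (1 - k%:R + a - b - c) j * poch (k%:R + d) j / poch d j
  = \sum_(i < j.+1) 'C(j, i)%:R *
      (poch (- k%:R) i * poch (k%:R - 1 - a + b + c + d) i / poch d i)
      * poch (1 + a - b - c) (j - i).
Proof.
move=> Hd.
set x := 1 + a - b - c; set e := k%:R - 1 - a + b + c + d.
have He : d = 1 + (- k%:R) + e - (1 - x - j%:R) - j%:R by rewrite /e /x; ring.
have S := Saal He Hd.
have E4 : 1 - x - j%:R - - k%:R = - (x - k%:R + j%:R - 1) by ring.
have E3 : 1 - x - j%:R - e = - (k%:R + d + j%:R - 1) by rewrite /e /x; ring.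
rewrite E3 E4 !poch_refl in S.
have E5 : x - k%:R + j%:R - 1 - j%:R + 1 = x - k%:R by ring.
have E6 : k%:R + d + j%:R - 1 - j%:R + 1 = k%:R + d by ring.
rewrite E5 E6 in S.
have -> : 1 - k%:R + a - b - c = x - k%:R by rewrite /x; ring.
have Hs := @sign_sq R j.
have G : poch (x - k%:R) j * poch (k%:R + d) j / poch d j =
  (-1) ^+ j * ((-1) ^+ j * poch (x - k%:R) j) * ((-1) ^+ j * poch (k%:R + d) j)
  * (-1) ^+ j / poch d j.
  transitivity (((-1) ^+ j * (-1) ^+ j) * ((-1) ^+ j * (-1) ^+ j) *
     poch (x - k%:R) j * poch (k%:R + d) j / poch d j); last by ring.
  by rewrite Hs mul1r mul1r.
rewrite G -S mulr_suml mulr_suml; apply: eq_bigr => [[l Hl]] _ /=.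
rewrite ltnS in Hl.
rewrite poch_negN //.
have -> : 1 - x - j%:R + l%:R = - (x + (j - l)%:R - 1) by rewrite natrB //; ring.
rewrite poch_refl.
have -> : x + (j - l)%:R - 1 - (j - l)%:R + 1 = x by ring.
have Ej : (-1) ^+ j = (-1) ^+ l * (-1) ^+ (j - l) :> R by rewrite -exprD subnKC.
rewrite Ej.
have Hf := @fact_neq0 R l; have Hdl := poch_nz_le Hl Hd.
have Hsl := @sign_sq R l; have Hsjl := @sign_sq R (j - l).
set s1 := (-1) ^+ l : R; set s2 := (-1) ^+ (j - l) : R.
transitivity ((s1 * s1) * (s2 * s2) * ('C(j, l)%:R * (poch (- k%:R) l * poch e l / poch d l) *
   poch x (j - l)) * (l`!%:R / l`!%:R) * (poch d j / poch d j)).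
  by field; rewrite Hf Hdl Hd.
by rewrite Hsl Hsjl !divff // !mulr1 mul1r.
Qed.


Lemma poch_nz {R : numClosedFieldType} (x : R) n : not_nonpos_int x -> poch x n != 0.
Proof.
move=> H; rewrite /poch; apply/prodf_neq0 => i _.
by rewrite addr_eq0; apply: H.
Qed.

Lemma Assemble {R : numClosedFieldType} (m : nat) (a b c w : R)
  (X Y Qf : nat -> R) :
  not_nonpos_int b -> not_nonpos_int c -> not_nonpos_int w ->
  not_nonpos_int (w - a) -> not_nonpos_int (1 + a - b) -> not_nonpos_int (1 + a - c) ->
  not_nonpos_int (2^-1 + 2^-1 * (a - w - m%:R)) ->
  not_nonpos_int (1 + 2^-1 * (a - w - m%:R)) ->
  (forall j, X j = \sum_(i < j.+1) 'C(j, i)%:R * Y i * poch (1 + a - b - c) (j - i)) ->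
  (forall n, \sum_(i < n.+1) poch (- n%:R) i * poch (n%:R + a) i * Y i
        / (i`!%:R * poch b i * poch c i) = Qf n) ->
  \sum_(j < m.+1) poch (a / 2) j * poch (2^-1 + a / 2) j * poch (1 + a - w) j
        * poch (- m%:R) j * X j
        / (j`!%:R * poch (1 + a - b) j * poch (1 + a - c) j *
           poch (2^-1 + 2^-1 * (a - w - m%:R)) j
           * poch (1 + 2^-1 * (a - w - m%:R)) j)
  = poch w m / poch (w - a) m *
    \sum_(n < m.+1)
      poch a n * poch b n * poch c n * poch (- m%:R) n
        / ((n`!%:R) * poch (1 + a - b) n * poch (1 + a - c) n * poch w n)
        * Qf n.
Proof.
move=> hb hc hw hwa hab hac h1 h2 HX HQ.
pose Z j := X j / (poch (1 + a - b) j * poch (1 + a - c) j).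
have HA := ClaimA Z (poch_nz m hw) (poch_nz m h1) (poch_nz m h2).
have Hw := poch_nz m hw; have Hwa := poch_nz m hwa.
have -> : \sum_(j < m.+1) poch (a / 2) j * poch (2^-1 + a / 2) j * poch (1 + a - w) j
        * poch (- m%:R) j * X j
        / (j`!%:R * poch (1 + a - b) j * poch (1 + a - c) j *
           poch (2^-1 + 2^-1 * (a - w - m%:R)) j
           * poch (1 + 2^-1 * (a - w - m%:R)) j)
  = \sum_(j < m.+1) poch (a / 2) j * poch (2^-1 + a / 2) j * poch (1 + a - w) j
        * poch (- m%:R) j * Z j
        / (j`!%:R * poch (2^-1 + 2^-1 * (a - w - m%:R)) j
           * poch (1 + 2^-1 * (a - w - m%:R)) j).
  apply: eq_bigr => j _; rewrite /Z.
  have := poch_nz j hab; have := poch_nz j hac; have := poch_nz j h1; have := poch_nz j h2.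
  have := @fact_neq0 R j.
  move=> H1 H2 H3 H4 H5; field; by rewrite H1 H2 H3 H4 H5.
have HK : poch w m / poch (w - a) m != 0 by rewrite mulf_neq0 // invr_eq0.
rewrite -[LHS](mulVKf HK) invf_div -HA; congr (_ * _); apply: eq_bigr => n _.
have Hg := poch_nz n hab; have Hd := poch_nz n hac.
have Hb := poch_nz n hb; have Hc := poch_nz n hc; have Hwn := poch_nz n hw.
have HB := ClaimB Y Hg Hd Hb Hc.
rewrite HQ in HB.
have -> : \sum_(j < n.+1) poch (- n%:R) j * poch (n%:R + a) j * Z j / j`!%:R
   = \sum_(j < n.+1) poch (- n%:R) j * poch (n%:R + a) j *
     (\sum_(i < j.+1) 'C(j, i)%:R * Y i * poch (1 + a - b - c) (j - i))
     / (j`!%:R * poch (1 + a - b) j * poch (1 + a - c) j).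
  apply: eq_bigr => j _; rewrite /Z -HX.
  have := poch_nz j hab; have := poch_nz j hac; have := @fact_neq0 R j.
  move=> H1 H2 H3; field; by rewrite H1 H2 H3.
rewrite HB.
have Hf := @fact_neq0 R n.
field; by rewrite Hf Hg Hd Hwn.
Qed.

Lemma sum_k_n {R : numClosedFieldType} (k n : nat) (F : nat -> R) :
  (forall i, (n < i)%N -> poch (- n%:R : R) i * F i = 0) ->
  (forall i, (k < i)%N -> poch (- n%:R : R) i * F i = 0) ->
  \sum_(i < n.+1) poch (- n%:R) i * F i = \sum_(i < k.+1) poch (- n%:R) i * F i.
Proof.
move=> Hn Hk.
rewrite (sum_widen (F := fun i => poch (- n%:R) i * F i) (leq_addr k n) Hn).
by rewrite (sum_widen (F := fun i => poch (- n%:R) i * F i) (leq_addl n k) Hk).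
Qed.

Theorem theorem11 (R : numClosedFieldType) (k m : nat) (a b c d w : R)
  (hb : not_nonpos_int b) (hc : not_nonpos_int c) (hd : not_nonpos_int d)
  (hw : not_nonpos_int w) (hwa : not_nonpos_int (w - a))
  (hab : not_nonpos_int (1 + a - b)) (hac : not_nonpos_int (1 + a - c))
  (h1 : not_nonpos_int (2^-1 + 2^-1 * (a - w - m%:R)))
  (h2 : not_nonpos_int (1 + 2^-1 * (a - w - m%:R))) :
  hypF1 [:: a / 2; 2^-1 + a / 2; 1 - k%:R + a - b - c; 1 + a - w; - m%:R]
        [:: 1 + a - b; 1 + a - c; 2^-1 + 2^-1 * (a - w - m%:R);
            1 + 2^-1 * (a - w - m%:R)] m
  = poch w m / poch (w - a) m *
    \sum_(n < m.+1)
      poch a n * poch b n * poch c n * poch (- m%:R) n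
        / ((n`!)%:R * poch (1 + a - b) n * poch (1 + a - c) n * poch w n)
        * Q2_3 k n a b c
  /\
  hypF1 [:: a / 2; 2^-1 + a / 2; 1 - k%:R + a - b - c; k%:R + d; 1 + a - w;
            - m%:R]
        [:: 1 + a - b; 1 + a - c; d; 2^-1 + 2^-1 * (a - w - m%:R);
            1 + 2^-1 * (a - w - m%:R)] m
  = poch w m / poch (w - a) m *
    \sum_(n < m.+1)
      poch a n * poch b n * poch c n * poch (- m%:R) n
        / ((n`!)%:R * poch (1 + a - b) n * poch (1 + a - c) n * poch w n)
        * Q2_4 k n a b c d.
Proof.
split.
- rewrite -(Assemble (X := fun j => poch (1 - k%:R + a - b - c) j)
      (Y := fun i => poch (- k%:R) i) (Qf := fun n => Q2_3 k n a b c) hb hc hw hwa hab hac h1 h2); first last.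
  + move=> n; rewrite /Q2_3.
    rewrite (eq_bigr (fun i : 'I_n.+1 => poch (- n%:R) i *
       (poch (n%:R + a) i * poch (- k%:R) i / (i`!%:R * poch b i * poch c i))));
      last by move=> i _; rewrite !mulrA.
    rewrite (@sum_k_n _ k n (fun i => poch (n%:R + a) i * poch (- k%:R) i / (i`!%:R * poch b i * poch c i))) => [|i Hi|i Hi].
    * by apply: eq_bigr => i _; rewrite !mulrA.
    * by rewrite poch_negnat // mul0r.
    * by rewrite [poch (- k%:R) i]poch_negnat // mulr0 mul0r mulr0.
  + by move=> j; rewrite E1.
  rewrite /hypF1; apply: eq_bigr => j _.
  rewrite !big_cons !big_nil.
  have := poch_nz j hab; have := poch_nz j hac; have := poch_nz j h1; have := poch_nz j h2.
  have := @fact_neq0 R j.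
  move=> H1 H2 H3 H4 H5; field; by rewrite H1 H2 H3 H4 H5.
- rewrite -(Assemble (X := fun j => poch (1 - k%:R + a - b - c) j * poch (k%:R + d) j / poch d j)
      (Y := fun i => poch (- k%:R) i * poch (k%:R - 1 - a + b + c + d) i / poch d i)
      (Qf := fun n => Q2_4 k n a b c d)
      hb hc hw hwa hab hac h1 h2); first last.
  + move=> n; rewrite /Q2_4.
    rewrite (eq_bigr (fun i : 'I_n.+1 => poch (- n%:R) i *
       (poch (n%:R + a) i * poch (- k%:R) i * poch (k%:R - 1 - a + b + c + d) i
        / (i`!%:R * poch b i * poch c i * poch d i))));
      last first.
      move=> i _; have := poch_nz i hd; have := poch_nz i hb; have := poch_nz i hc.
      have := @fact_neq0 R i.
      move=> H1 H2 H3 H4; field; by rewrite H1 H2 H3 H4.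
    rewrite (@sum_k_n _ k n (fun i => poch (n%:R + a) i * poch (- k%:R) i * poch (k%:R - 1 - a + b + c + d) i / (i`!%:R * poch b i * poch c i * poch d i))) => [|i Hi|i Hi].
    * by apply: eq_bigr => i _; rewrite !mulrA.
    * by rewrite poch_negnat // mul0r.
    * by rewrite [poch (- k%:R) i]poch_negnat // mulr0 mul0r mul0r mulr0.
  + by move=> j; rewrite E2 // poch_nz.
  rewrite /hypF1; apply: eq_bigr => j _.
  rewrite !big_cons !big_nil.
  have := poch_nz j hab; have := poch_nz j hac; have := poch_nz j h1; have := poch_nz j h2.
  have := @fact_neq0 R j; have := poch_nz j hd.
  move=> H0 H1 H2 H3 H4 H5; field; by rewrite H0 H1 H2 H3 H4 H5.
Qed.
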